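(* For the discrete-time Glauber dynamics for the ferromagnetic Ising model (with zero external field) on any finite graph with nonnegative interaction strengths, $t_{\mathrm{mix}}^+\ \ge\ \log 2\cdot(\mathtt{gap}^{-1}-1)$.
   Context: Let $G=(V,E)$ be a finite graph and $J=\{J_{uv}\ge0:uv\in E\}$. The Ising measure on $\{\pm1\}^V$ is $\mu(\sigma)=Z^{-1}\exp(\sum_{uv\in E}J_{uv}\sigma(u)\sigma(v))$. Glauber dynamics: at each step pick a uniform vertex $v$ and resample $\sigma(v)$ from its conditional law under $\mu$ given all other spins. $\mathtt{gap}=1-\lambda$, where $\lambda$ is the second largest eigenvalue of the transition kernel. $t_{\mathrm{mix}}^+=\min\{t:\|\mathbb P_+(X_t\in\cdot)-\mu\|_{TV}\le1/4\}$, where $\mathbb P_+$ refers to the chain started at the all-plus configuration and $\|\cdot\|_{TV}$ is total variation distance. *)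

(* Defs.v *)
From HB Require Import structures.
From mathcomp Require Import all_boot all_order all_algebra.
From mathcomp Require Import reals.
From mathcomp Require Import sequences exp.
From mathcomp Require polyrcf.

Set Implicit Arguments.
Unset Strict Implicit.
Unset Printing Implicit Defensive.

Import Order.TTheory GRing.Theory Num.Theory.
Local Open Scope ring_scope.

Section Ising.
Variables (R : realType) (V : finType).

Definition simple_graph (e : rel V) : Prop :=
  (forall u v, e u v = e v u) /\ (forall v, ~~ e v v).

(* Configurations sigma : {+1,-1}^V, encoded with true = +1, false = -1. *)
Definition config := {ffun V -> bool}.
Definition spin (b : bool) : R := if b then 1 else -1.
Definition all_plus : config := [ffun=> true].

(* sum_{uv in E} J_uv sigma(u) sigma(v): each undirected edge once
   (sum over ordered pairs, halved; J is symmetric). *)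
Definition ising_energy (e : rel V) (J : V -> V -> R) (s : config) : R :=
  (\sum_(u : V) \sum_(v : V | e u v) J u v * spin (s u) * spin (s v)) / 2.

Definition ising_Z e J : R := \sum_(s : config) expR (ising_energy e J s).

Definition ising_mu e J (s : config) : R := expR (ising_energy e J s) / ising_Z e J.

Definition agree_off (v : V) (s t : config) : bool :=
  [forall u, (u != v) ==> (s u == t u)].

Definition cond_law e J (v : V) (s t : config) : R :=
  if agree_off v s t then
    ising_mu e J t / (\sum_(t' : config | agree_off v s t') ising_mu e J t')
  else 0.

Definition glauber e J (s t : config) : R :=
  (#|V|%:R)^-1 * \sum_(v : V) cond_law e J v s t.

Definition glauber_mx e J : 'M[R]_#|{: config}| :=
  \matrix_(i, j) glauber e J (enum_val i) (enum_val j).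

(* Eigenvalues of a square matrix counted with algebraic multiplicity
   (the real ones), in nonincreasing order. *)
Definition eigenvalues_desc n (A : 'M[R]_n) : seq R :=
  let p := char_poly A in
  sort (fun x y => y <= x)
    (flatten [seq nseq (mup x p) x | x <- polyrcf.rootsR p]).

Definition lambda2 n (A : 'M[R]_n) : R := nth 0 (eigenvalues_desc A) 1.

Definition glauber_gap e J : R := 1 - lambda2 (glauber_mx e J).

Definition glauber_law e J (t : nat) : config -> R :=
  iter t (fun d (y : config) => \sum_(x : config) d x * glauber e J x y)
    (fun y => if y == all_plus then 1 else 0).

Definition tv_dist (p q : config -> R) : R :=
  (\sum_(x : config) `|p x - q x|) / 2.

Definition mixed_plus e J (t : nat) : Prop :=
  tv_dist (glauber_law e J t) (ising_mu e J) <= 4^-1.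

Definition is_tmix_plus e J (t : nat) : Prop :=
  mixed_plus e J t /\ (forall s, (s < t)%N -> ~ mixed_plus e J s).

End Ising.

(* Main.v *)
Require Import Defs.
From HB Require Import structures.
From mathcomp Require Import all_boot all_order all_algebra.
From mathcomp Require Import reals.
From mathcomp Require Import sequences exp.
From mathcomp Require polyrcf.
From mathcomp Require Import ring lra.
Import Order.TTheory GRing.Theory Num.Theory.
Local Open Scope ring_scope.

Set Implicit Arguments.
Unset Strict Implicit.
Unset Printing Implicit Defensive.

Lemma spin_mono (R : realType) (cu cw a b a' b' : bool) :
  a ==> a' -> b ==> b' ->
  spin R (if cu then true else a) * spin R (if cw then true else b)
  - spin R (if cu then false else a) * spin R (if cw then false else b) <=
  spin R (if cu then true else a') * spin R (if cw then true else b')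
  - spin R (if cu then false else a') * spin R (if cw then false else b').
Proof.
by case: cu cw a b a' b' => [] [] [] [] [] [] //= _ _; rewrite /spin; lra.
Qed.

Lemma key_ineq (R : realType) (a b a' b' G H G' H' : R) :
  0 < a -> 0 < b -> 0 < a' -> 0 < b' -> a * b' <= a' * b ->
  H <= G -> G <= G' -> H <= H' -> H' <= G' ->
  (a * G + b * H) / (a + b) <= (a' * G' + b' * H') / (a' + b').
Proof.
move=> ha hb ha' hb' hab hGH hG hH hGH'.
rewrite ler_pdivrMr ?addr_gt0 // mulrAC ler_pdivlMr ?addr_gt0 //.
have h1 : 0 <= a * (a' + b') * (G' - G) by apply: mulr_ge0; [apply: mulr_ge0; lra|lra].
have h2 : 0 <= b * (a' + b') * (H' - H) by apply: mulr_ge0; [apply: mulr_ge0; lra|lra].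
have h3 : 0 <= (a' * b - a * b') * (G' - H') by apply: mulr_ge0; lra.
nra.
Qed.

Section Glauber.
Variables (R : realType) (V : finType) (e : rel V) (J : V -> V -> R).
Hypothesis hV : (0 < #|V|)%N.
Hypothesis hJ : forall u v, e u v -> 0 <= J u v.

Local Notation config := (config V).
Local Notation mu := (ising_mu e J).

Definition upd (x : config) v b : config := [ffun u => if u == v then b else x u].
Definition flip (x : config) : config := [ffun u => ~~ x u].
Definition Pop (g : config -> R) (x : config) := \sum_y glauber e J x y * g y.
Definition leC (x y : config) := [forall u, x u ==> y u].
Definition incr (g : config -> R) := forall x y, leC x y -> g x <= g y.

Lemma Z_gt0 : 0 < ising_Z e J.
Proof.
rewrite /ising_Z (bigD1 (all_plus V)) //=.
have := expR_gt0 (ising_energy e J (all_plus V)).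
have : 0 <= \sum_(i | i != all_plus V) expR (ising_energy e J i).
  by apply: sumr_ge0 => i _; apply: expR_ge0.
lra.
Qed.

Lemma mu_gt0 s : 0 < mu s.
Proof. by rewrite /ising_mu divr_gt0 ?expR_gt0 ?Z_gt0. Qed.

Lemma upd_neq x v : upd x v true != upd x v false.
Proof.
apply/eqP => /ffunP /(_ v); rewrite !ffunE eqxx => //.
Qed.

Lemma agree_off_upd v x y :
  agree_off v x y = (y == upd x v true) || (y == upd x v false).
Proof.
apply/idP/idP.
- move/forallP => H; apply/orP.
  have Hy : forall b, y v = b -> y = upd x v b.
    move=> b yb; apply/ffunP => u; rewrite ffunE.
    case: eqP => [->//|/eqP ne].
    by have /implyP/(_ ne)/eqP := H u.
  by case E : (y v); [left|right]; apply/eqP; apply: Hy.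
- by case/orP => /eqP ->; apply/forallP => u; apply/implyP => ne;
    rewrite ffunE (negbTE ne).
Qed.

Lemma sum_agree v x (F : config -> R) :
  \sum_(t | agree_off v x t) F t = F (upd x v true) + F (upd x v false).
Proof.
rewrite (eq_bigl (fun t => (t == upd x v true) || (t == upd x v false)));
  last by move=> t; rewrite agree_off_upd.
rewrite (bigD1 (upd x v true)) ?eqxx //= (bigD1 (upd x v false)) /=; last first.
  by rewrite eqxx orbT eq_sym upd_neq.
rewrite big1 ?addr0 // => t /andP[/andP[/orP[]->]]; by rewrite ?andbF.
Qed.
Definition cterm (g : config -> R) (x : config) v :=
  (mu (upd x v true) * g (upd x v true) + mu (upd x v false) * g (upd x v false))
  / (mu (upd x v true) + mu (upd x v false)).

Lemma cond_sum v x (g : config -> R) :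
  \sum_t cond_law e J v x t * g t = cterm g x v.
Proof.
rewrite (eq_bigr (fun t => if agree_off v x t then
   mu t / (\sum_(t' | agree_off v x t') mu t') * g t else 0)); last first.
  by move=> t _; rewrite /cond_law; case: ifP; rewrite ?mul0r.
rewrite -big_mkcond /= !sum_agree /cterm.
have := mu_gt0 (upd x v true); have := mu_gt0 (upd x v false) => h1 h2.
ring.
Qed.

Lemma Pop_expand g x :
  Pop g x = (#|V|%:R)^-1 * \sum_v cterm g x v.
Proof.
rewrite /Pop /glauber.
under eq_bigr => y _ do rewrite -mulrA mulr_suml.
rewrite -mulr_sumr exchange_big /=; congr (_ * _).
by apply: eq_bigr => v _; rewrite cond_sum.
Qed.

Lemma Pop_const c x : Pop (fun _ => c) x = c.
Proof.
rewrite Pop_expand.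
have -> : \sum_v cterm (fun _ => c) x v = \sum_(v : V) c.
  apply: eq_bigr => v _; rewrite /cterm -mulrDl mulrAC divff ?mul1r //.
  by apply: lt0r_neq0; rewrite addr_gt0 ?mu_gt0.
rewrite sumr_const -[c *+ _]mulr_natr mulrCA mulVf ?mulr1 //.
by rewrite pnatr_eq0 -lt0n.
Qed.

Lemma energy_mono v x x' : leC x x' ->
  ising_energy e J (upd x v true) - ising_energy e J (upd x v false) <=
  ising_energy e J (upd x' v true) - ising_energy e J (upd x' v false).
Proof.
move/forallP => hx.
rewrite /ising_energy -!mulrBl ler_pM2r ?invr_gt0 ?ltr0n //.
rewrite -!sumrB; apply: ler_sum => u _.
rewrite -!sumrB; apply: ler_sum => w euw.
rewrite !ffunE -!mulrA -!mulrBr ler_wpM2l ?hJ //.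
exact: spin_mono.
Qed.

Lemma leC_refl x : leC x x.
Proof. by apply/forallP => u; apply/implyP. Qed.

Lemma leC_trans x y z : leC x y -> leC y z -> leC x z.
Proof.
move=> /forallP h1 /forallP h2; apply/forallP => u; apply/implyP => hu.
by have /implyP := h2 u; apply; have /implyP := h1 u; apply.
Qed.

Lemma leC_upd x x' v b : leC x x' -> leC (upd x v b) (upd x' v b).
Proof.
move=> /forallP h; apply/forallP => u; rewrite !ffunE; case: eqP => // _.
by rewrite implybb.
Qed.

Lemma leC_upd_ft x v : leC (upd x v false) (upd x v true).
Proof.
by apply/forallP => u; rewrite !ffunE; case: eqP => // _; rewrite implybb.
Qed.

Lemma Pop_incr g : incr g -> incr (Pop g).
Proof.
move=> hg x x' hx; rewrite !Pop_expand ler_wpM2l ?invr_ge0 ?ler0n //.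
apply: ler_sum => v _; rewrite /cterm.
apply: key_ineq; rewrite ?mu_gt0 //.
- have h : expR (ising_energy e J (upd x v true) - ising_energy e J (upd x v false)) <=
     expR (ising_energy e J (upd x' v true) - ising_energy e J (upd x' v false)).
    by rewrite ler_expR; apply: energy_mono.
  rewrite !expRB in h.
  rewrite /ising_mu.
  set z := ising_Z e J.
  set A := expR (ising_energy e J (upd x v true)) in h *.
  set B := expR (ising_energy e J (upd x v false)) in h *.
  set A' := expR (ising_energy e J (upd x' v true)) in h *.
  set B' := expR (ising_energy e J (upd x' v false)) in h *.
  have hB : 0 < B by apply: expR_gt0.
  have hB' : 0 < B' by apply: expR_gt0.
  have hz : 0 < z^-1 by rewrite invr_gt0 Z_gt0.
  have hh : A * B' <= A' * B.
    by move: h; rewrite ler_pdivrMr // mulrAC ler_pdivlMr //.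
  have h2 : 0 <= z^-1 * z^-1 by apply: mulr_ge0; lra.
  nra.
- by apply: hg; apply: leC_upd_ft.
- by apply: hg; apply: leC_upd.
- by apply: hg; apply: leC_upd.
- by apply: hg; apply: leC_upd_ft.
Qed.
Lemma flipK : involutive flip.
Proof. by move=> x; apply/ffunP => u; rewrite !ffunE negbK. Qed.

Lemma energy_flip x : ising_energy e J (flip x) = ising_energy e J x.
Proof.
rewrite /ising_energy; congr (_ / _); apply: eq_bigr => u _; apply: eq_bigr => w _.
by rewrite !ffunE; case: (x u); case: (x w); rewrite /spin /=; ring.
Qed.

Lemma mu_flip x : mu (flip x) = mu x.
Proof. by rewrite /ising_mu energy_flip. Qed.

Lemma agree_flip v x y : agree_off v (flip x) (flip y) = agree_off v x y.
Proof.
apply: eq_forallb => u; rewrite !ffunE.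
by case: (x u); case: (y u).
Qed.

Lemma glauber_flip x y : glauber e J (flip x) (flip y) = glauber e J x y.
Proof.
rewrite /glauber; congr (_ * _); apply: eq_bigr => v _.
rewrite /cond_law agree_flip mu_flip; case: ifP => // _; congr (_ / _).
rewrite (reindex_inj (inv_inj flipK)) /=.
by apply: eq_big => t; rewrite ?agree_flip ?mu_flip.
Qed.

Lemma Pop_ext g g' x : (forall y, g y = g' y) -> Pop g x = Pop g' x.
Proof. by move=> h; apply: eq_bigr => y _; rewrite h. Qed.

Lemma Pop_flip g x : Pop (fun y => g (flip y)) x = Pop g (flip x).
Proof.
rewrite /Pop [RHS](reindex_inj (inv_inj flipK)) /=.
by apply: eq_bigr => y _; rewrite glauber_flip.
Qed.

Lemma iter_ext n g g' x : (forall y, g y = g' y) -> iter n Pop g x = iter n Pop g' x.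
Proof.
elim: n x => [|n IH] x h /=; first by apply: h.
by apply: Pop_ext => y; apply: IH.
Qed.

Lemma iter_flip n g x :
  iter n Pop (fun y => g (flip y)) x = iter n Pop g (flip x).
Proof.
elim: n x => [|n IH] x //=.
rewrite (@Pop_ext _ (fun y => iter n Pop g (flip y))); last by move=> y; apply: IH.
exact: Pop_flip.
Qed.

Lemma iter_const n c x : iter n Pop (fun _ => c) x = c.
Proof.
elim: n x => [|n IH] x //=.
by rewrite (@Pop_ext _ (fun _ => c)) ?Pop_const.
Qed.

Lemma iter_incr n g : incr g -> incr (iter n Pop g).
Proof. by elim: n => [|n IH] //= hg; apply: Pop_incr; apply: IH. Qed.

Lemma law_expect t g :
  \sum_y glauber_law e J t y * g y = iter t Pop g (all_plus V).
Proof.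
elim: t g => [|t IH] g.
  rewrite /glauber_law /= (bigD1 (all_plus V)) //= eqxx mul1r big1 ?addr0 //.
  by move=> y /negbTE ->; rewrite mul0r.
rewrite iterSr -IH.
have -> : glauber_law e J t.+1 =
   (fun y => \sum_x glauber_law e J t x * glauber e J x y) by [].
under eq_bigr do rewrite mulr_suml.
rewrite exchange_big /=; apply: eq_bigr => x _.
rewrite /Pop mulr_sumr; apply: eq_bigr => y _; by rewrite mulrA.
Qed.

Lemma law_sum t : \sum_y glauber_law e J t y = 1.
Proof.
have := law_expect t (fun _ => 1); rewrite iter_const => <-.
by apply: eq_bigr => y _; rewrite mulr1.
Qed.

Lemma mu_sum : \sum_y mu y = 1.
Proof.
rewrite /ising_mu -mulr_suml divff //; apply: lt0r_neq0; exact: Z_gt0.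
Qed.

Lemma tv_bound (p q f : config -> R) (a b : R) :
  \sum_x p x = \sum_x q x -> (forall x, a <= f x <= b) ->
  `|\sum_x p x * f x - \sum_x q x * f x| <= tv_dist p q * (b - a).
Proof.
move=> hs hf.
set m := (a + b) / 2.
have E : \sum_x p x * f x - \sum_x q x * f x =
         \sum_x (p x - q x) * (f x - m).
  have -> : \sum_x (p x - q x) * (f x - m) =
      \sum_x (p x * f x - q x * f x) - m * (\sum_x p x - \sum_x q x).
    rewrite -sumrB mulr_sumr -sumrB; apply: eq_bigr => x _; ring.
  by rewrite hs subrr mulr0 subr0 sumrB.
rewrite E; apply: le_trans (ler_norm_sum _ _ _) _.
rewrite /tv_dist -mulrA mulr_suml; apply: ler_sum => x _.
rewrite normrM; apply: ler_wpM2l; first exact: normr_ge0.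
have := hf x; case/andP => h1 h2.
rewrite ler_norml; apply/andP; split; rewrite /m; lra.
Qed.

Definition all_minus : config := flip (all_plus V).

Lemma leC_minus x : leC all_minus x.
Proof. by apply/forallP => u; rewrite !ffunE. Qed.

Lemma leC_plus x : leC x (all_plus V).
Proof. by apply/forallP => u; rewrite !ffunE implybT. Qed.

Lemma contraction t g : tv_dist (glauber_law e J t) mu <= 4^-1 -> incr g ->
  iter t Pop g (all_plus V) - iter t Pop g all_minus <=
  (g (all_plus V) - g all_minus) / 2.
Proof.
move=> hd hg.
have hb : forall x, g all_minus <= g x <= g (all_plus V).
  by move=> x; rewrite !hg ?leC_minus ?leC_plus.
have hb' : forall x, g all_minus <= g (flip x) <= g (all_plus V) by move=> x; apply: hb.
have hs : \sum_x glauber_law e J t x = \sum_x mu x by rewrite law_sum mu_sum.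
have h1 := tv_bound hs hb.
have h2 := tv_bound hs hb'.
rewrite -law_expect /all_minus -iter_flip -law_expect.
have hmf : \sum_x mu x * g (flip x) = \sum_x mu x * g x.
  rewrite [RHS](reindex_inj (inv_inj flipK)) /=.
  by apply: eq_bigr => x _; rewrite mu_flip.
rewrite hmf in h2.
have hd0 : 0 <= tv_dist (glauber_law e J t) mu.
  by rewrite /tv_dist divr_ge0 // sumr_ge0 // => x _; apply: normr_ge0.
have hg0 : 0 <= g (all_plus V) - g all_minus.
  by have := hb all_minus; case/andP => _ ?; lra.
move: h1 h2; rewrite !ler_norml.
set D := tv_dist _ _.
set A := \sum_x glauber_law e J t x * g x.
set B := \sum_x glauber_law e J t x * g (flip x).
set M := \sum_x mu x * g x.
set W := g (all_plus V) - g all_minus.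
move=> /andP[h1 h1'] /andP[h2 h2'].
have : D * W <= 4^-1 * W by apply: ler_wpM2r.
nra.
Qed.
Lemma contraction_iter t h : tv_dist (glauber_law e J t) mu <= 4^-1 -> incr h ->
  forall k, iter (k * t) Pop h (all_plus V) - iter (k * t) Pop h all_minus <=
  (2^-1) ^+ k * (h (all_plus V) - h all_minus).
Proof.
move=> hd hh; elim => [|k IH].
  by rewrite mul0n expr0 mul1r.
rewrite mulSn !iterD.
apply: le_trans (contraction hd (iter_incr (k * t) hh)) _.
rewrite exprS -mulrA [X in _ <= X]mulrC.
by apply: ler_wpM2r; [rewrite invr_ge0 ler0n | exact: IH].
Qed.

Lemma eigen_ex lam : root (char_poly (glauber_mx e J)) lam ->
  exists w : config -> R, [exists x, w x != 0] /\
    forall y, \sum_x w x * glauber e J x y = lam * w y.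
Proof.
rewrite -eigenvalue_root_char => /eigenvalueP [v hv nz].
exists (fun x => v 0 (enum_rank x)); split.
  case: (boolP [exists x, v 0 (enum_rank x) != 0]) => // /existsPn H.
  exfalso; apply: (negP nz); apply/eqP/matrixP => i j.
  rewrite mxE ord1; have := H (enum_val j); rewrite enum_valK negbK => /eqP //.
move=> y.
move/rowP: hv => /(_ (enum_rank y)); rewrite !mxE => <-.
rewrite [RHS](reindex enum_rank) /=; last first.
  by apply: onW_bij; apply: enum_rank_bij.
by apply: eq_bigr => x _; rewrite mxE !enum_rankK.
Qed.

Section Eigen.
Variable (lam : R) (w : config -> R).
Hypothesis hw : forall y, \sum_x w x * glauber e J x y = lam * w y.

Lemma w_Pop G : \sum_x w x * Pop G x = lam * \sum_x w x * G x.
Proof.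
rewrite /Pop.
under eq_bigr do rewrite mulr_sumr.
rewrite exchange_big /= mulr_sumr; apply: eq_bigr => y _.
rewrite mulrA -hw mulr_suml; apply: eq_bigr => x _; by rewrite mulrA.
Qed.

Lemma w_iter n g : \sum_x w x * iter n Pop g x = lam ^+ n * \sum_x w x * g x.
Proof.
elim: n => [|n IH]; first by rewrite expr0 mul1r.
by rewrite iterS w_Pop IH exprS mulrA.
Qed.

Lemma w_sum : lam != 1 -> \sum_x w x = 0.
Proof.
move=> hl.
have := w_Pop (fun _ => 1).
under eq_bigr do rewrite Pop_const.
under [X in _ = lam * X]eq_bigr do rewrite mulr1.
under eq_bigr do rewrite mulr1.
move=> h; apply/eqP; move: hl; apply: contraNT => hs.
have : (1 - lam) * \sum_x w x = 0 by rewrite mulrBl mul1r -h subrr.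
move/eqP; rewrite mulf_eq0 (negbTE hs) orbF subr_eq0 eq_sym => //.
Qed.

End Eigen.

Lemma upset_ex (w : config -> R) : [exists x, w x != 0] ->
  exists z, w z != 0 /\ forall y, leC z y -> y != z -> w y = 0.
Proof.
case/existsP => x0 hx0.
case: (@arg_maxnP _ x0 (fun y => w y != 0) (fun y : config => #|[set u | y u]|) hx0) => z wz hmax.
exists z; split => // y hzy nyz.
apply/eqP; apply/negPn/negP => wy.
have := hmax y wy.
have hsub : [set u | z u] \proper [set u | y u].
  rewrite properEneq; apply/andP; split.
    apply/eqP => hs; apply: (negP nyz); apply/eqP/ffunP => u.
    by move/setP: hs => /(_ u); rewrite !inE => ->.
  apply/subsetP => u; rewrite !inE.
  by move/forallP: hzy => /(_ u) /implyP.
move=> /= hle; have := proper_card hsub; by rewrite ltnNge hle.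
Qed.

Lemma bernoulli (q : R) k : 1 <= q -> 1 + k%:R * (q - 1) <= q ^+ k.
Proof.
move=> hq; elim: k => [|k IH]; first by rewrite mul0r addr0 expr0.
rewrite exprS -natr1.
have hk : 0 <= k%:R :> R by apply: ler0n.
have : q * (1 + k%:R * (q - 1)) <= q * q ^+ k by apply: ler_wpM2l => //; lra.
have : 0 <= k%:R * (q - 1) * (q - 1) by apply: mulr_ge0; [apply: mulr_ge0|]; lra.
nra.
Qed.

Lemma main_bound t lam : is_tmix_plus e J t ->
  root (char_poly (glauber_mx e J)) lam -> 0 < lam -> lam < 1 ->
  lam ^+ t <= 2^-1.
Proof.
move=> [hd _] hroot hl0 hl1.
have {}hd : tv_dist (glauber_law e J t) mu <= 4^-1 by exact: hd.
case: (eigen_ex hroot) => w [wnz hw].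
have hws : \sum_x w x = 0 by apply: (w_sum hw); rewrite lt_eqF.
case: (upset_ex wnz) => z [wz hz].
pose h := fun y : config => if leC z y then 1 else 0 : R.
have hinc : incr h.
  move=> x y hxy; rewrite /h; case hzx: (leC z x).
    by rewrite (leC_trans hzx hxy).
  by case: (leC z y); rewrite ?ler01 ?lexx.
have hwh : \sum_x w x * h x = w z.
  rewrite (bigD1 z) //= /h leC_refl mulr1 big1 ?addr0 // => y nyz.
  case: ifP => hzy; last by rewrite mulr0.
  by rewrite (hz y hzy nyz) mul0r.
set s := `|w z|.
have hs : 0 < s by rewrite normr_gt0.
set W := h (all_plus V) - h all_minus.
have hW : 0 <= W by rewrite subr_ge0; apply: hinc; apply: leC_minus.
set C := (\sum_x `|w x|) * W.
have hC : 0 <= C by apply: mulr_ge0 => //; apply: sumr_ge0 => x _; apply: normr_ge0.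
have bound : forall k, (lam ^+ t) ^+ k * s <= (2^-1) ^+ k * C.
  move=> k.
  set G := iter (k * t) Pop h.
  have hG := iter_incr (k * t) hinc.
  have e1 : \sum_x w x * (G x - G all_minus) = (lam ^+ t) ^+ k * w z.
    have -> : \sum_x w x * (G x - G all_minus) =
              \sum_x w x * G x - G all_minus * \sum_x w x.
      by rewrite mulr_sumr -sumrB; apply: eq_bigr => x _; ring.
    by rewrite hws mulr0 subr0 /G (w_iter hw) hwh -exprM mulnC.
  have hl : 0 <= (lam ^+ t) ^+ k by apply: exprn_ge0; apply: exprn_ge0; lra.
  have -> : (lam ^+ t) ^+ k * s = `|\sum_x w x * (G x - G all_minus)|.
    by rewrite e1 normrM ger0_norm.
  apply: le_trans (ler_norm_sum _ _ _) _.
  apply: le_trans (_ : \sum_x `|w x| * (G (all_plus V) - G all_minus) <= _).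
    apply: ler_sum => x _; rewrite normrM; apply: ler_wpM2l; first exact: normr_ge0.
    have h1 : G all_minus <= G x := hG _ _ (leC_minus x).
    have h2 : G x <= G (all_plus V) := hG _ _ (leC_plus x).
    rewrite ger0_norm; lra.
  rewrite -mulr_suml /C mulrCA; apply: ler_wpM2l.
    by apply: sumr_ge0 => x _; apply: normr_ge0.
  exact: contraction_iter.
rewrite leNgt; apply/negP => hbig.
set q := 2 * lam ^+ t.
have hq : 1 < q.
  have h2 : 1 = 2 * 2^-1 :> R by rewrite mulfV // pnatr_eq0.
  by rewrite /q {1}h2 ltr_pM2l.
pose k := Num.Def.archi_bound (C / (s * (q - 1))).
have hk : C / (s * (q - 1)) < k%:R.
  by apply: archi_boundP; apply: divr_ge0 => //; apply: mulr_ge0; lra.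
have hb := bound k.
have hqk : q ^+ k * s <= C.
  have h2p : 0 <= 2 ^+ k :> R by apply: exprn_ge0; apply: ler0n.
  have := ler_wpM2l h2p hb.
  by rewrite !mulrA -!exprMn divff ?pnatr_eq0 // expr1n mul1r.
have hber := bernoulli k (ltW hq).
have hq1 : 0 < s * (q - 1) by apply: mulr_gt0; lra.
move: hk; rewrite ltr_pdivrMr //.
have : (1 + k%:R * (q - 1)) * s <= q ^+ k * s by apply: ler_wpM2r; lra.
nra.
Qed.
End Glauber.

Lemma lambda2_root (R : realType) n (A : 'M[R]_n) :
  0 < lambda2 A -> root (char_poly A) (lambda2 A).
Proof.
rewrite /lambda2 /eigenvalues_desc.
set s := sort _ _.
case: (ltnP 1 (size s)) => hs; last by rewrite nth_default // ltxx.
move=> _; have := mem_nth 0 hs; rewrite mem_sort.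
case/flattenP => l /mapP [x hx ->]; rewrite mem_nseq => /andP [_ /eqP ->].
by move: hx; rewrite /polyrcf.rootsR; apply: polyrcf.root_roots.
Qed.

Theorem lemma2p1 (R : realType) (V : finType) (e : rel V) (J : V -> V -> R)
    (hV : (0 < #|V|)%N) (he : simple_graph e)
    (hJsym : forall u v, J u v = J v u)
    (hJ : forall u v, e u v -> 0 <= J u v)
    (tmix : nat) (htmix : is_tmix_plus e J tmix) :
  ln 2 * ((glauber_gap e J)^-1 - 1) <= tmix%:R.
Proof.
rewrite /glauber_gap.
set L := lambda2 (glauber_mx e J).
have hln2 : 0 <= ln (2 : R) by apply: ln_ge0; rewrite ler1n.
have ht : 0 <= tmix%:R :> R by apply: ler0n.
case: (lerP L 0) => hL0.
  have h1 : (1 - L)^-1 <= 1 by rewrite invf_le1; lra.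
  have : ln 2 * ((1 - L)^-1 - 1) <= 0 by apply: mulr_ge0_le0 => //; lra.
  lra.
case: (lerP 1 L) => hL1.
  have h1 : (1 - L)^-1 <= 0 by rewrite invr_le0; lra.
  have : ln 2 * ((1 - L)^-1 - 1) <= 0 by apply: mulr_ge0_le0 => //; lra.
  lra.
have hroot := lambda2_root hL0.
have hb := main_bound hV hJ htmix hroot hL0 hL1.
have hLpos : L ^+ tmix \is Num.pos by rewrite posrE exprn_gt0.
have h2pos : (2 : R)^-1 \is Num.pos by rewrite posrE invr_gt0 ltr0n.
have hln : ln (L ^+ tmix) <= ln (2^-1) by rewrite ler_ln.
rewrite lnXn // lnV ?posrE ?ltr0n // in hln.
have hl : ln (L^-1) <= L^-1 - 1.
  have := @le_ln1Dx R (L^-1 - 1); rewrite [1 + _]addrC subrK; apply.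
  have : 0 < L^-1 by rewrite invr_gt0.
  lra.
rewrite lnV ?posrE // in hl.
have hmain : ln 2 <= tmix%:R * (L^-1 - 1).
  have : ln 2 <= tmix%:R * (- ln L) by rewrite -[ln L *+ _]mulr_natl in hln; rewrite mulrN lerNr.
  move=> h; apply: le_trans h _; apply: ler_wpM2l => //.
have hq : 0 <= L / (1 - L) by apply: divr_ge0; lra.
have hL : L != 0 by rewrite gt_eqF.
have h1L : 1 - L != 0 by rewrite subr_eq0 eq_sym lt_eqF.
have E1 : (1 - L)^-1 - 1 = L / (1 - L).
  by field; rewrite ?hL ?h1L.
have E2 : (L^-1 - 1) * (L / (1 - L)) = 1.
  by field; rewrite ?hL ?h1L.
rewrite E1.
by have := ler_wpM2r hq hmain; rewrite -mulrA E2 mulr1.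
Qed.
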